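(* For every vector space $\mathcal X$ over $\mathbb K$, the exponential vector space $\mathscr L(\mathcal X)$ has a basis, i.e. $\mathscr L(\mathcal X)\smallsetminus[\mathscr L(\mathcal X)]_0$ has a basis.
   Context: $\mathbb K$ is $\mathbb R$ or $\mathbb C$. An exponential vector space (evs) over a field $K$ is a partially ordered set $(X,\leq)$ with a binary operation $+$ on $X$ and a map $K\times X\to X$, $(\alpha,x)\mapsto \alpha x$, such that: (A1) $(X,+)$ is a commutative semigroup with identity $\theta$; (A2) $x\leq y$ implies $x+z\leq y+z$ and $\alpha x\leq \alpha y$ for all $z\in X$, $\alpha\in K$; (A3) $\alpha(x+y)=\alpha x+\alpha y$, $\alpha(\beta x)=(\alpha\beta)x$, $(\alpha+\beta)x\leq \alpha x+\beta x$, $1x=x$; (A4) $\alpha x=\theta$ iff $\alpha=0$ or $x=\theta$; (A5) $x+(-1)x=\theta$ iff $x\in X_0$, where $X_0:=\{z\in X: y\not\leq z \text{ for all } y\in X\smallsetminus\{z\}\}$ (the set of minimal elements); (A6) for each $x\in X$ there is $p\in X_0$ with $p\leq x$. $\mathscr L(\mathcal X)$ is the set of all linear subspaces of $\mathcal X$ with $\mathcal X_1+\mathcal X_2:=\mathrm{span}(\mathcal X_1\cup\mathcal X_2)$, $\alpha\cdot\mathcal X_1:=\mathcal X_1$ if $\alpha\neq0$ and $0\cdot\mathcal X_1:=\{\theta\}$, and order given by inclusion; it is an evs over $\mathbb K$ with primitive space $\{\{\theta\}\}$. For $x\in X\smallsetminus X_0$ let $L(x):=\{z\in X: z\geq \alpha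 x+p \text{ for some } \alpha\in K\smallsetminus\{0\},\ p\in X_0\}$. A subset $B\subseteq X\smallsetminus X_0$ generates $X\smallsetminus X_0$ if $X\smallsetminus X_0=\bigcup_{b\in B}L(b)$. Elements $x,y\in X\smallsetminus X_0$ are orderly dependent if $x\in L(y)$ or $y\in L(x)$, and orderly independent otherwise; $B$ is orderly independent if any two distinct members are orderly independent. A basis of $X\smallsetminus X_0$ is an orderly independent generating subset. *)

(* Defs.v *)
From HB Require Import structures.
From mathcomp Require Import all_boot all_algebra.
From mathcomp Require Import reals.
From mathcomp Require Import complex.

Set Implicit Arguments.
Unset Strict Implicit.
Unset Printing Implicit Defensive.

Import GRing.Theory.
Local Open Scope ring_scope.

Section EVSNotions.
Variables (K : fieldType) (T : Type) (carrier : T -> Prop)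
  (le : T -> T -> Prop) (add : T -> T -> T) (smul : K -> T -> T).

Definition evs_prim (z : T) : Prop :=
  carrier z /\ forall y, carrier y -> y <> z -> ~ le y z.

Definition evs_L (x z : T) : Prop :=
  carrier z /\ exists (a : K) (p : T), a != 0 /\ evs_prim p /\ le (add (smul a x) p) z.

Definition evs_nonprim (x : T) : Prop := carrier x /\ ~ evs_prim x.

Definition evs_generates (B : T -> Prop) : Prop :=
  (forall b, B b -> evs_nonprim b) /\
  (forall z, evs_nonprim z <-> exists b, B b /\ evs_L b z).

Definition evs_orderly_dependent (x y : T) : Prop := evs_L y x \/ evs_L x y.

Definition evs_orderly_independent_set (B : T -> Prop) : Prop :=
  forall x y, B x -> B y -> x <> y -> ~ evs_orderly_dependent x y.

Definition evs_is_basis (B : T -> Prop) : Prop :=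
  evs_generates B /\ evs_orderly_independent_set B.

Definition evs_has_basis : Prop := exists B, evs_is_basis B.

End EVSNotions.

Section SubspaceEVS.
Variables (K : fieldType) (V : lmodType K).

Definition is_subspace (S : V -> Prop) : Prop :=
  S 0 /\ (forall u v, S u -> S v -> S (u + v)) /\
  (forall (a : K) v, S v -> S (a *: v)).

Definition span_set (A : V -> Prop) : V -> Prop :=
  fun v => forall W, is_subspace W -> (forall u, A u -> W u) -> W v.

Definition Lsub_le (A B : V -> Prop) : Prop := forall v, A v -> B v.

Definition Lsub_add (A B : V -> Prop) : V -> Prop :=
  span_set (fun v => A v \/ B v).

Definition Lsub_smul (a : K) (A : V -> Prop) : V -> Prop :=
  if a == 0 then (fun v => v = 0) else A.

Definition Lsub_has_basis : Prop :=
  evs_has_basis is_subspace Lsub_le Lsub_add Lsub_smul.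

End SubspaceEVS.

(* Main.v *)
Require Import Defs.
From HB Require Import structures.
From mathcomp Require Import all_boot all_algebra.
From mathcomp Require Import reals.
From mathcomp Require Import complex.
From Stdlib Require Import Classical FunctionalExtensionality PropExtensionality.

Local Open Scope ring_scope.
Import GRing.Theory.

Section Gen.
Variables (K : fieldType) (V : lmodType K).

Let Z : V -> Prop := fun v => v = 0.
Let line (v : V) : V -> Prop := fun w => exists k : K, w = k *: v.

Lemma pred_ext (A B : V -> Prop) : (forall v, A v <-> B v) -> A = B.
Proof.
move=> H; apply: functional_extensionality => v; apply: propositional_extensionality; exact: H.
Qed.

Lemma Z_sub : is_subspace Z.
Proof.
rewrite /Z; split; first by [].
split; first by move=> u v -> ->; rewrite addr0.
by move=> a v ->; rewrite scaler0.
Qed.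

Lemma line_sub v : is_subspace (line v).
Proof.
split; first by exists 0; rewrite scale0r.
split; first by move=> u w [k ->] [l ->]; exists (k + l); rewrite scalerDl.
by move=> a w [k ->]; exists (a * k); rewrite scalerA.
Qed.

Lemma prim_iff z : evs_prim (@is_subspace K V) (@Lsub_le K V) z <-> z = Z.
Proof.
split.
  move=> [Hz H]; apply: NNPP => Hne.
  apply: (H Z Z_sub); first by move=> E; apply: Hne.
  by move=> v ->; case: Hz.
move=> ->; split; first exact: Z_sub.
move=> y Hy Hne Hle; apply: Hne; apply: pred_ext => v; split; first exact: Hle.
by move=> ->; case: Hy.
Qed.

Lemma L_iff b z : is_subspace b ->
  evs_L (@is_subspace K V) (@Lsub_le K V) (@Lsub_add K V) (@Lsub_smul K V) b z <-> is_subspace z /\ Lsub_le b z.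
Proof.
move=> Hb; split.
  move=> [Hz [a [p [Ha [Hp Hle]]]]]; split => // v bv; apply: Hle.
  rewrite /Lsub_smul (negbTE Ha) => W _ HW; apply: HW; by left.
move=> [Hz Hle]; split => //; exists 1, Z; split; first exact: oner_neq0.
split; first by apply/prim_iff.
rewrite /Lsub_smul oner_eq0 => v Hv; apply: Hv => // u [/Hle //|->]; by case: Hz.
Qed.

Lemma gen_basis : Lsub_has_basis V.
Proof.
exists (fun S => exists v, v != 0 /\ S = line v).
have nonprim_line v : v != 0 -> evs_nonprim (@is_subspace K V) (@Lsub_le K V) (line v).
  move=> Hv; split; first exact: line_sub.
  move/prim_iff => E; have : line v v by exists 1; rewrite scale1r.
  by rewrite E /Z => /eqP; rewrite (negbTE Hv).
split; first split.
- by move=> b [v [Hv ->]]; exact: nonprim_line.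
- move=> z; split.
    move=> [Hz Hnp].
    have [v [zv Hv]] : exists v, z v /\ v != 0.
      apply: NNPP => Hn; apply: Hnp; apply/prim_iff; apply: pred_ext => v; split.
        by move=> zv; apply/eqP; apply: NNPP => /negP Hv; apply: Hn; exists v.
      by move=> ->; case: Hz.
    exists (line v); split; first by exists v.
    apply/L_iff; first exact: line_sub.
    split => // w [k ->]; case: Hz => _ [_]; exact.
  move=> [b [[v [Hv ->]]]] /L_iff [| Hz Hle]; first exact: line_sub.
  split => // /prim_iff E.
  have : z v by apply: Hle; exists 1; rewrite scale1r.
  by rewrite E /Z => /eqP; rewrite (negbTE Hv).
- move=> x y [u [Hu ->]] [v [Hv ->]] Hne.
  have key : forall u v : V, u != 0 -> v != 0 -> Lsub_le (line u) (line v) -> line u = line v.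
    move=> u' v' Hu' Hv' Hle.
    have [k Ek] : line v' u' by apply: Hle; exists 1; rewrite scale1r.
    have Hk : k != 0 by apply: contraNneq Hu' => k0; rewrite Ek k0 scale0r.
    apply: pred_ext => w; split; first exact: Hle.
    move=> [l ->]; exists (l / k); rewrite Ek scalerA mulfVK //.
  move=> [/L_iff [|_ H]|/L_iff [|_ H]]; try exact: line_sub.
  + by apply: Hne; symmetry; apply: key.
  + by apply: Hne; apply: key.
Qed.
End Gen.

Theorem mainTheorem12 (R : realType) :
  (forall V : lmodType R, Lsub_has_basis V) /\
  (forall V : lmodType R[i], Lsub_has_basis V).
Proof.
split => V; exact: gen_basis.
Qed.
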